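(* Let $t(z),d(z)\in\mathbb{C}[[z]]$ with $t^2-4d$ having a simple zero at $z=0$, let $\tilde X=\operatorname{Spf}\mathbb{C}[[\tilde z]]$ be the smooth spectral curve $\xi^2-t\xi+d=0$, with coordinate $\tilde z=\sqrt{t^2-4d}$ and canonical $1$-form $\mu=\xi\,dz|_{\tilde X}$. Let $a(\tilde z,\lambda)=\sum_{i\ge0}a_i(\tilde z)\lambda^i\in\mathbb{C}((\tilde z))[[\lambda]]$ with $a(\tilde z,0)=\mu(d\tilde z)^{-1}$. Let $Y$ be the set of $r(\tilde z,\lambda)\in\mathbb{C}((\tilde z))[[\lambda]]$ such that $r(\tilde z,0)\in\mathbb{C}[[\tilde z]]^\times$ and $a'=a+\lambda r^{-1}\frac{dr}{d\tilde z}$ satisfies $a'\in\tilde z^{-1}\mathbb{C}[[\tilde z,\lambda]]$ and $\operatorname{res}_{\tilde z=0}a'=-\lambda/2$; the group $\mathbb{C}[[\tilde z,\lambda]]^\times$ acts on $Y$ by multiplication. Then $Y$ is either empty or a single $\mathbb{C}[[\tilde z,\lambda]]^\times$-orbit, and $Y$ is non-empty if and only if $a_1(\tilde z)\in\tilde z^{-1}\mathbb{C}[[\tilde z]]$ and $\operatorname{res}_{\tilde z=0}a(\tilde z,\lambda)=-\lambda/2$.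
   Context: Residues of series in $\mathbb{C}((\tilde z))[[\lambda]]$ are taken coefficientwise in $\lambda$ (coefficient of $\tilde z^{-1}$). *)

(* Defs.v *)
From HB Require Import structures.
From mathcomp Require Import all_boot all_order all_algebra.
From mathcomp Require Import complex reals.
From Stdlib Require Import ClassicalEpsilon.
Set Implicit Arguments. Unset Strict Implicit. Unset Printing Implicit Defensive.
Import Order.TTheory GRing.Theory Num.Theory.
Local Open Scope ring_scope.

Section FormalSeries.
Variable K : fieldType.

Definition ps := nat -> K.
Definition ps_add (f g : ps) : ps := fun n => f n + g n.
Definition ps_scale (c : K) (f : ps) : ps := fun n => c * f n.
Definition ps_mul (f g : ps) : ps := fun n => \sum_(k < n.+1) f k * g (n - k)%N.
Definition ps_one : ps := fun n => if n == 0%N then 1 else 0.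
Definition ps_X : ps := fun n => if n == 1%N then 1 else 0.
Definition ps_exp (f : ps) (k : nat) : ps := iter k (ps_mul f) ps_one.
(* composition f(Z), meaningful when Z 0 = 0 *)
Definition ps_comp (f Z : ps) : ps :=
  fun n => \sum_(k < n.+1) f k * ps_exp Z k n.
Definition ps_deriv (f : ps) : ps := fun n => n.+1%:R * f n.+1.

Definition disc (t d : ps) : ps := ps_add (ps_mul t t) (ps_scale (- 4%:R) d).

(* ---------- K((w)) : Laurent series, f n = coeff of w^n (n : int) ---------- *)
Definition laur := int -> K.
Definition laur_valid (f : laur) : Prop :=
  exists N : int, forall n : int, n < N -> f n = 0.
(* a lower bound of the support (any one; chosen classically) *)
Definition lbound (f : laur) : int :=
  epsilon (inhabits 0%R) (fun N : int => forall n : int, n < N -> f n = 0).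
Definition laur_mul (f g : laur) : laur := fun n =>
  \sum_(k < (absz (n - lbound f - lbound g)%R).+1)
     f (lbound f + k%:Z) * g (n - lbound f - k%:Z).
Definition laur_one : laur := fun n => if n == 0 then 1 else 0.
Definition laur_deriv (f : laur) : laur := fun n => (n + 1)%:~R * f (n + 1).
Definition laur_in_ps (f : laur) : Prop := forall n : int, n < 0 -> f n = 0.
Definition ps_unit1 (f : laur) : Prop :=
  laur_in_ps f /\ exists h : laur, laur_in_ps h /\ laur_mul f h = laur_one.
Definition laur_in_winv_ps (f : laur) : Prop := forall n : int, n < -1 -> f n = 0.

(* ---------- K((w))[[lam]] : a i = coefficient of lam^i ---------- *)
Definition ser := nat -> laur.
Definition ser_valid (a : ser) : Prop := forall i, laur_valid (a i).
Definition ser_add (a b : ser) : ser := fun i n => a i n + b i n.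
Definition ser_mul (a b : ser) : ser :=
  fun i n => \sum_(j < i.+1) laur_mul (a j) (b (i - j)%N) n.
Definition ser_one : ser := fun i n => if (i == 0%N) && (n == 0) then 1 else 0.
Definition ser_lam (a : ser) : ser :=
  fun i => if i is i'.+1 then a i' else (fun _ => 0).
Definition ser_deriv (a : ser) : ser := fun i => laur_deriv (a i).
(* multiplicative inverse in K((w))[[lam]] (when it exists) *)
Definition ser_inv (r : ser) : ser :=
  epsilon (inhabits (fun _ _ => 0))
          (fun s : ser => ser_valid s /\ ser_mul r s = ser_one).
Definition ser_res (a : ser) : nat -> K := fun i => a i (-1).
Definition minus_half_lam : nat -> K := fun i => if i == 1%N then - 2%:R^-1 else 0.
Definition in_ps2 (a : ser) : Prop := forall i (n : int), n < 0 -> a i n = 0.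
Definition in_winv_ps2 (a : ser) : Prop := forall i (n : int), n < -1 -> a i n = 0.
Definition ps2_unit (g : ser) : Prop :=
  in_ps2 g /\ exists h : ser, in_ps2 h /\ ser_mul g h = ser_one.

Definition a_prime (a r : ser) : ser :=
  ser_add a (ser_lam (ser_mul (ser_inv r) (ser_deriv r))).

Definition inY (a r : ser) : Prop :=
  [/\ ser_valid r, ps_unit1 (r 0%N), in_winv_ps2 (a_prime a r)
    & ser_res (a_prime a r) = minus_half_lam].

(* a(w,0) = mu (dw)^{-1} on the spectral curve xi^2 - t xi + d = 0 with
   coordinate w = 2 xi - t (so w^2 = t^2 - 4d), z = Z(w), xi = (t(Z(w)) + w)/2,
   mu = xi dz = xi Z'(w) dw. *)
Definition spectral_a0 (t d : ps) (a0 : laur) : Prop :=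
  exists Z : ps,
    [/\ Z 0%N = 0,
        ps_comp (disc t d) Z = ps_mul ps_X ps_X,
        laur_in_ps a0
      & forall n : nat,
          a0 n%:Z = ps_mul (ps_scale (2%:R^-1) (ps_add (ps_comp t Z) ps_X))
                           (ps_deriv Z) n].

End FormalSeries.
Arguments minus_half_lam {K}.
Arguments ps_X {K}.
Arguments ps_one {K}.
Arguments ser_one {K}.
Arguments laur_one {K}.

(* Main.v *)
Require Import Defs.
From HB Require Import structures.
From mathcomp Require Import all_boot all_order all_algebra.
From mathcomp Require Import complex reals.
From mathcomp Require Import zify ring lra.
From mathcomp Require Import boolp.
From Stdlib Require Import ClassicalEpsilon.
Import Order.TTheory GRing.Theory Num.Theory.
Local Open Scope ring_scope.

Set Implicit Arguments. Unset Strict Implicit. Unset Printing Implicit Defensive.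

Section Win.
Variable K : numFieldType.

Definition lb (f : laur K) (N : int) := forall n : int, n < N -> f n = 0.

Lemma lbound_spec (f : laur K) : laur_valid f -> lb f (lbound f).
Proof. by move=> h; rewrite /lbound; apply: epsilon_spec. Qed.

Lemma lb_le (f : laur K) N N' : lb f N -> N' <= N -> lb f N'.
Proof. by move=> h le n hn; apply: h; apply: lt_le_trans le. Qed.

Definition win (A : int) (m : nat) (F : int -> K) := \sum_(k < m) F (A + k%:Z).

Lemma win_split A d k F : win A (d + k) F = win A d F + win (A + d%:Z) k F.
Proof.
rewrite /win big_split_ord /=; congr (_ + _); apply: eq_bigr => i _ //=.
by rewrite PoszD addrA.
Qed.

Lemma win0 A d F : (forall i : nat, (i < d)%N -> F (A + i%:Z) = 0) -> win A d F = 0.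
Proof. by move=> h; rewrite /win big1 // => i _; apply: h. Qed.

Lemma win_shrink A m B p F : A <= B -> B + p%:Z <= A + m%:Z ->
  (forall x, F x != 0 -> B <= x /\ x < B + p%:Z) -> win A m F = win B p F.
Proof.
move=> hAB hBp hF.
have Fz : forall x, ~ (B <= x /\ x < B + p%:Z) -> F x = 0.
  by move=> x hx; case: (eqVneq (F x) 0) => // /hF.
pose d := absz (B - A)%R; pose e := absz (A + m%:Z - B - p%:Z)%R.
have hm : m = (d + (p + e))%N by apply/eqP; rewrite -(eqr_nat int); rewrite /d /e; lia.
have hB : B = A + d%:Z by rewrite /d; lia.
rewrite hm win_split win0 ?add0r; last first.
  move=> i hi; apply: Fz => -[h1 h2]; lia.
rewrite win_split [X in _ + X]win0 ?addr0 -hB //.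
move=> i hi; apply: Fz => -[h1 h2]; lia.
Qed.

Lemma win_supp A m A' m' F :
  (forall x, F x != 0 -> A <= x /\ x < A + m%:Z) ->
  (forall x, F x != 0 -> A' <= x /\ x < A' + m'%:Z) ->
  win A m F = win A' m' F.
Proof.
move=> h1 h2.
pose B := Num.max A A'; pose E := Num.min (A + m%:Z) (A' + m'%:Z).
have hs : forall x, F x != 0 -> B <= x /\ x < E.
  move=> x hx; have := h1 x hx; have := h2 x hx; rewrite /B /E.
  rewrite ge_max lt_min; lia.
case: (lerP B E) => hBE.
- pose p := absz (E - B)%R.
  have hE : E = B + p%:Z by rewrite /p; lia.
  rewrite (@win_shrink A m B p) ?(@win_shrink A' m' B p) //.
  + by rewrite /B le_max lexx orbT.
  + by rewrite -hE /E ge_min lexx orbT.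
  + by rewrite -hE.
  + by rewrite /B le_max lexx.
  + by rewrite -hE /E ge_min lexx.
  + by rewrite -hE.
- rewrite !win0 // => i hi; apply/eqP; apply: contraT => /hs; lia.
Qed.

End Win.


Section LM.
Variable K : numFieldType.
Implicit Types f g h : laur K.

Lemma lb_valid f N : lb f N -> laur_valid f.
Proof. by move=> h; exists N. Qed.

Lemma conv_supp f g N1 N2 n x : lb f N1 -> lb g N2 -> f x * g (n - x) != 0 ->
  N1 <= x /\ x < n - N2 + 1.
Proof.
move=> h1 h2 hx; split.
  by rewrite leNgt; apply/negP => /h1 e; move: hx; rewrite e mul0r eqxx.
rewrite ltNge; apply/negP => hle; move: hx; rewrite (h2 (n - x)) ?mulr0 ?eqxx //.
lia.
Qed.

Lemma laur_mul_win f g N1 N2 n A m : lb f N1 -> lb g N2 -> A <= N1 ->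
  n - N2 < A + m%:Z -> laur_mul f g n = win A m (fun x => f x * g (n - x)).
Proof.
move=> h1 h2 hA hm.
have v1 := lbound_spec (lb_valid h1); have v2 := lbound_spec (lb_valid h2).
rewrite /laur_mul.
transitivity (win (lbound f) (absz (n - lbound f - lbound g)%R).+1 (fun x => f x * g (n - x))).
  by apply: eq_bigr => i _; rewrite opprD addrA.
apply: win_supp => x hx.
  have := conv_supp v1 v2 hx; lia.
have := conv_supp h1 h2 hx; lia.
Qed.

End LM.


Section Laws.
Variable K : numFieldType.
Implicit Types f g h : laur K.

Lemma lb_min f M : laur_valid f -> lb f (Num.min (lbound f) M) /\ Num.min (lbound f) M <= M.
Proof.
move=> v; split; last by rewrite ge_min lexx orbT.
by apply: lb_le (lbound_spec v) _; rewrite ge_min lexx.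
Qed.

Lemma lb3 f g h : laur_valid f -> laur_valid g -> laur_valid h ->
  exists N, [/\ N <= 0, lb f N, lb g N & lb h N].
Proof.
move=> vf vg vh.
have [l1 e1] := lb_min 0 vf.
have [l2 e2] := lb_min (Num.min (lbound f) 0) vg.
have [l3 e3] := lb_min (Num.min (lbound g) (Num.min (lbound f) 0)) vh.
exists (Num.min (lbound h) (Num.min (lbound g) (Num.min (lbound f) 0))); split => //.
- by apply: le_trans e3 _; apply: le_trans e2 e1.
- by apply: lb_le l1 _; apply: le_trans e3 e2.
- exact: lb_le l2 e3.
Qed.

Lemma win_shift A m (F : int -> K) c : win (A - c) m F = win A m (fun x => F (x - c)).
Proof. by apply: eq_bigr => i _; congr F; ring. Qed.

Lemma win_rev A m (F : int -> K) n :
  win A m F = win (n - A - m%:Z + 1) m (fun y => F (n - y)).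
Proof.
rewrite /win (reindex_inj rev_ord_inj) /=; apply: eq_bigr => i _; congr F.
rewrite subnS; have := ltn_ord i; lia.
Qed.

Lemma lb_mul f g N1 N2 : lb f N1 -> lb g N2 -> lb (laur_mul f g) (N1 + N2).
Proof.
move=> h1 h2 n hn; rewrite (laur_mul_win (A := N1) (m := 0%N) h1 h2) //.
  by rewrite /win big_ord0.
lia.
Qed.

Lemma laur_mulC f g N : lb f N -> lb g N -> laur_mul f g = laur_mul g f.
Proof.
move=> h1 h2; apply: funext => n.
pose m := (absz (n - N - N)%R).+1.
rewrite (laur_mul_win (A := N) (m := m) h1 h2) ?lexx; last by rewrite /m; lia.
rewrite (laur_mul_win (A := n - N - m%:Z + 1) (m := m) h2 h1); last 2 first.
- rewrite /m; lia.
- lia.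
rewrite (win_rev _ _ _ n); apply: eq_bigr => i _; rewrite mulrC; congr (_ * _).
  by congr g; ring.
by [].
Qed.

Definition cst (k : K) : laur K := fun n => if n == 0 then k else 0.

Lemma lb_cst k : lb (cst k) 0.
Proof. by move=> n hn; rewrite /cst ifF //; apply/negbTE; lia. Qed.

Lemma laur_mul_cst k f N : lb f N -> laur_mul (cst k) f = fun n => k * f n.
Proof.
move=> h; apply: funext => n.
pose A := Num.min N 0.
have hA : A <= 0 by rewrite /A ge_min lexx orbT.
have hAN : A <= N by rewrite /A ge_min lexx.
clearbody A.
pose m := (absz (n - N - A)%R + absz A).+1.
rewrite (laur_mul_win (A := A) (m := m) (lb_cst k) h) //; last by rewrite /m; lia.
rewrite (win_supp (A' := 0) (m' := 1%N)); last 2 first.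
- move=> z0; rewrite /cst; have [->|ny] := eqVneq z0 0; last by rewrite mul0r eqxx.
  move=> _; rewrite /m; lia.
- move=> z0; rewrite /cst; have [->|ny] := eqVneq z0 0; last by rewrite mul0r eqxx.
  by move=> _; lia.
by rewrite /win big_ord1 /cst add0r eqxx subr0.
Qed.

Lemma laur_one_cst : laur_one = cst (1 : K).
Proof. by []. Qed.

Lemma laur_mulDl f g h N : lb f N -> lb g N -> lb h N ->
  laur_mul (fun n => f n + g n) h = fun n => laur_mul f h n + laur_mul g h n.
Proof.
move=> h1 h2 h3; apply: funext => n.
have h12 : lb (fun n => f n + g n) N by move=> x hx; rewrite h1 ?h2 ?addr0.
pose m := (absz (n - N - N)%R).+1.
have hm : n - N < N + m%:Z by rewrite /m; lia.
rewrite (laur_mul_win (A := N) (m := m) h12 h3) ?lexx //.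
rewrite (laur_mul_win (A := N) (m := m) h1 h3) ?lexx //.
rewrite (laur_mul_win (A := N) (m := m) h2 h3) ?lexx //.
by rewrite /win -big_split; apply: eq_bigr => i _; rewrite mulrDl.
Qed.

Lemma laur_mulA f g h N : N <= 0 -> lb f N -> lb g N -> lb h N ->
  laur_mul (laur_mul f g) h = laur_mul f (laur_mul g h).
Proof.
move=> hN h1 h2 h3; apply: funext => n.
pose A := N + N; pose M := (absz (n - N - N - N - N)%R).+1.
have hfg := lb_mul h1 h2; have hgh := lb_mul h2 h3.
rewrite (laur_mul_win (A := A) (m := M) hfg h3); last 2 first.
- by rewrite /A lexx.
- rewrite /M /A; lia.
rewrite (laur_mul_win (A := A) (m := M) h1 hgh); last 2 first.
- rewrite /A; lia.
- rewrite /M /A; lia.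
have L : forall x, laur_mul f g x * h (n - x) =
    win A M (fun y => f y * g (x - y) * h (n - x)).
  move=> x; case: (eqVneq (h (n - x)) 0) => [->|hx].
    by rewrite mulr0 /win big1 // => i _; rewrite mulr0.
  have hxN : x - N < n - N - N + 1.
    rewrite ltNge; apply/negP => hle; move/eqP: hx; apply; apply: h3; lia.
  rewrite (laur_mul_win (A := A) (m := M) h1 h2); last 2 first.
  - rewrite /A; lia.
  - rewrite /M /A; lia.
  by rewrite /win mulr_suml.
have R : forall y, f y * laur_mul g h (n - y) =
    win A M (fun x => f y * g (x - y) * h (n - x)).
  move=> y; case: (eqVneq (f y) 0) => [->|hy].
    by rewrite mul0r /win big1 // => i _; rewrite !mul0r.
  have hyN : N <= y.
    rewrite leNgt; apply/negP => hlt; move/eqP: hy; apply; exact: h1.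
  rewrite (laur_mul_win (A := A - y) (m := M) h2 h3); last 2 first.
  - rewrite /A; lia.
  - rewrite /M /A; lia.
  rewrite win_shift /win mulr_sumr; apply: eq_bigr => i _; rewrite mulrA.
  by congr (_ * _ * h _); ring.
rewrite /win; under eq_bigr do rewrite L; under [RHS]eq_bigr do rewrite R.
by rewrite /win exchange_big.
Qed.

Lemma lb_deriv f N : lb f N -> lb (laur_deriv f) (N - 1).
Proof. by move=> h n hn; rewrite /laur_deriv h ?mulr0 //; lia. Qed.

Lemma laur_deriv_mul f g N : lb f N -> lb g N ->
  laur_deriv (laur_mul f g) =
  fun n => laur_mul (laur_deriv f) g n + laur_mul f (laur_deriv g) n.
Proof.
move=> h1 h2; apply: funext => n.
pose m := (absz (n - N - N)%R).+3.
have d1 := lb_deriv h1; have d2 := lb_deriv h2.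
rewrite /laur_deriv (laur_mul_win (A := N) (m := m) h1 h2) ?lexx; last by rewrite /m; lia.
rewrite (laur_mul_win (A := N - 1) (m := m) d1 (lb_le h2 (_ : N - 1 <= N))); last 3 first.
- lia.
- by rewrite lexx.
- rewrite /m; lia.
rewrite (laur_mul_win (A := N) (m := m) h1 d2); last 2 first.
- by rewrite lexx.
- rewrite /m; lia.
rewrite win_shift /win mulr_sumr -big_split; apply: eq_bigr => i _ /=.
rewrite /laur_deriv.
have -> : N + i%:Z - 1 + 1 = N + i%:Z by ring.
have -> : n - (N + i%:Z - 1) = n + 1 - (N + i%:Z) by ring.
have -> : n - (N + i%:Z) + 1 = n + 1 - (N + i%:Z) by ring.
have -> : (n + 1)%:~R = (N + i%:Z)%:~R + (n + 1 - (N + i%:Z))%:~R :> K.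
  by rewrite -intrD; congr (_ %:~R); ring.
  ring.
by [].
Qed.

End Laws.


Section VLdef.
Variable K : numFieldType.

Definition VL := {f : laur K | laur_valid f}.
HB.instance Definition _ := gen_eqMixin VL.
HB.instance Definition _ := gen_choiceMixin VL.

Definition vval (x : VL) : laur K := proj1_sig x.

Lemma vl_eq (x y : VL) : vval x = vval y -> x = y.
Proof.
case: x => f pf; case: y => g pg /= e; subst g; congr exist; exact: Prop_irrelevance.
Qed.

Lemma valid_lb (f : laur K) : laur_valid f -> exists N, lb f N.
Proof. by case=> N h; exists N. Qed.

Lemma valid_add (f g : laur K) : laur_valid f -> laur_valid g -> laur_valid (fun n => f n + g n).
Proof.
move=> vf vg; have [N [_ h1 h2 _]] := lb3 vf vg vg.
by exists N => n hn; rewrite h1 ?h2 ?addr0.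
Qed.

Lemma valid_opp (f : laur K) : laur_valid f -> laur_valid (fun n => - f n).
Proof. by case=> N h; exists N => n hn; rewrite h ?oppr0. Qed.

Lemma valid_zero : laur_valid (fun _ : int => 0 : K).
Proof. by exists 0. Qed.

Lemma valid_mul (f g : laur K) : laur_valid f -> laur_valid g -> laur_valid (laur_mul f g).
Proof.
move=> vf vg; exact: lb_valid (lb_mul (lbound_spec vf) (lbound_spec vg)).
Qed.

Lemma valid_cst (k : K) : laur_valid (cst k).
Proof. exact: lb_valid (lb_cst k). Qed.

Lemma valid_deriv (f : laur K) : laur_valid f -> laur_valid (laur_deriv f).
Proof. move=> vf; exact: lb_valid (lb_deriv (lbound_spec vf)). Qed.

Definition vadd (x y : VL) : VL := exist _ _ (valid_add (proj2_sig x) (proj2_sig y)).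
Definition vopp (x : VL) : VL := exist _ _ (valid_opp (proj2_sig x)).
Definition vzero : VL := exist _ _ valid_zero.
Definition vmul (x y : VL) : VL := exist _ _ (valid_mul (proj2_sig x) (proj2_sig y)).
Definition vcst (k : K) : VL := exist _ _ (valid_cst k).
Definition vone : VL := vcst 1.
Definition vder (x : VL) : VL := exist _ _ (valid_deriv (proj2_sig x)).

Lemma vaddA : associative vadd.
Proof. by move=> x y z; apply: vl_eq; apply: funext => n /=; rewrite addrA. Qed.
Lemma vaddC : commutative vadd.
Proof. by move=> x y; apply: vl_eq; apply: funext => n /=; rewrite addrC. Qed.
Lemma vadd0 : left_id vzero vadd.
Proof. by move=> x; apply: vl_eq; apply: funext => n /=; rewrite add0r. Qed.
Lemma vaddN : left_inverse vzero vopp vadd.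
Proof. by move=> x; apply: vl_eq; apply: funext => n /=; rewrite addNr. Qed.

HB.instance Definition _ := GRing.isZmodule.Build VL vaddA vaddC vadd0 vaddN.

Lemma vmulA : associative vmul.
Proof.
move=> x y z; apply: vl_eq => /=.
have [N [hN h1 h2 h3]] := lb3 (proj2_sig x) (proj2_sig y) (proj2_sig z).
symmetry; exact: laur_mulA hN h1 h2 h3.
Qed.
Lemma vmulC : commutative vmul.
Proof.
move=> x y; apply: vl_eq => /=.
have [N [hN h1 h2 h3]] := lb3 (proj2_sig x) (proj2_sig y) (proj2_sig y).
exact: laur_mulC h1 h2.
Qed.
Lemma vmul1 : left_id vone vmul.
Proof.
move=> x; apply: vl_eq => /=; rewrite (laur_mul_cst _ (lbound_spec (proj2_sig x))).
by apply: funext => n; rewrite mul1r.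
Qed.
Lemma vmulDl : left_distributive vmul vadd.
Proof.
move=> x y z; apply: vl_eq => /=.
have [N [hN h1 h2 h3]] := lb3 (proj2_sig x) (proj2_sig y) (proj2_sig z).
exact: laur_mulDl h1 h2 h3.
Qed.
Lemma vone_neq0 : vone != vzero.
Proof.
apply/eqP => h; have := congr1 (fun x => vval x 0) h; rewrite /= /cst eqxx.
by move/eqP; rewrite oner_eq0.
Qed.

HB.instance Definition _ := GRing.Zmodule_isComNzRing.Build VL vmulA vmulC vmul1 vmulDl vone_neq0.

Lemma vvalD (x y : VL) n : vval (x + y) n = vval x n + vval y n. Proof. by []. Qed.
Lemma vvalN (x : VL) n : vval (- x) n = - vval x n. Proof. by []. Qed.
Lemma vval0 n : vval (0 : VL) n = 0. Proof. by []. Qed.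
Lemma vvalB (x y : VL) n : vval (x - y) n = vval x n - vval y n. Proof. by []. Qed.
Lemma vvalM (x y : VL) : vval (x * y) = laur_mul (vval x) (vval y). Proof. by []. Qed.
Lemma vval1 : vval (1 : VL) = laur_one. Proof. by []. Qed.
Lemma vval_sum I (r : seq I) (P : pred I) (F : I -> VL) n :
  vval (\sum_(i <- r | P i) F i) n = \sum_(i <- r | P i) vval (F i) n.
Proof.
by apply: (big_morph (fun x : VL => vval x n) (id1 := 0) (op1 := +%R)).
Qed.
Lemma vvalMn (x : VL) k n : vval (x *+ k) n = vval x n *+ k.
Proof. by elim: k => [|k IH]; rewrite ?mulr0n // !mulrS vvalD IH. Qed.

Lemma vcstM (k : K) (x : VL) n : vval (vcst k * x) n = k * vval x n.
Proof. by rewrite vvalM /= (laur_mul_cst _ (lbound_spec (proj2_sig x))). Qed.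

Lemma vderD (x y : VL) : vder (x + y) = vder x + vder y.
Proof. by apply: vl_eq; apply: funext => n /=; rewrite /laur_deriv /= mulrDr. Qed.
Lemma vderN (x : VL) : vder (- x) = - vder x.
Proof. by apply: vl_eq; apply: funext => n /=; rewrite /laur_deriv /= mulrN. Qed.
Lemma vder0 : vder 0 = 0.
Proof. by apply: vl_eq; apply: funext => n /=; rewrite /laur_deriv /= mulr0. Qed.
Lemma vderM (x y : VL) : vder (x * y) = vder x * y + x * vder y.
Proof.
apply: vl_eq => /=.
have [N [hN h1 h2 _]] := lb3 (proj2_sig x) (proj2_sig y) (proj2_sig y).
exact: laur_deriv_mul h1 h2.
Qed.
Lemma vder1 : vder 1 = 0.
Proof.
apply: vl_eq; apply: funext => n /=; rewrite /laur_deriv /cst.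
by case: (eqVneq (n + 1) 0) => [->|]; rewrite ?mulr0 // mul0r.
Qed.
Lemma vder_sum I (r : seq I) (P : pred I) (F : I -> VL) :
  vder (\sum_(i <- r | P i) F i) = \sum_(i <- r | P i) vder (F i).
Proof. by apply: (big_morph vder vderD vder0). Qed.

End VLdef.


Section PSdef.
Variable R : comNzRingType.

Record PS := mkPS { pc : nat -> R }.
HB.instance Definition _ := gen_eqMixin PS.
HB.instance Definition _ := gen_choiceMixin PS.

Lemma ps_eq (p q : PS) : (forall i, pc p i = pc q i) -> p = q.
Proof. by case: p => f; case: q => g /= h; congr mkPS; apply: funext. Qed.

Definition padd p q := mkPS (fun i => pc p i + pc q i).
Definition popp p := mkPS (fun i => - pc p i).
Definition pzero := mkPS (fun _ => 0).
Definition pmul p q := mkPS (fun i => \sum_(j < i.+1) pc p j * pc q (i - j)).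
Definition pone := mkPS (fun i => if i == 0%N then 1 else 0).

Lemma paddA : associative padd.
Proof. by move=> x y z; apply: ps_eq => i /=; rewrite addrA. Qed.
Lemma paddC : commutative padd.
Proof. by move=> x y; apply: ps_eq => i /=; rewrite addrC. Qed.
Lemma padd0 : left_id pzero padd.
Proof. by move=> x; apply: ps_eq => i /=; rewrite add0r. Qed.
Lemma paddN : left_inverse pzero popp padd.
Proof. by move=> x; apply: ps_eq => i /=; rewrite addNr. Qed.
HB.instance Definition _ := GRing.isZmodule.Build PS paddA paddC padd0 paddN.

Definition tr (p : PS) (i : nat) : {poly R} := \poly_(j < i.+1) pc p j.

Lemma coef_tr p i j : (j <= i)%N -> (tr p i)`_j = pc p j.
Proof. by move=> h; rewrite coef_poly ltnS h. Qed.

Lemma agree (p p' q q' : {poly R}) i :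
  (forall j, (j <= i)%N -> p`_j = p'`_j) -> (forall j, (j <= i)%N -> q`_j = q'`_j) ->
  (p * q)`_i = (p' * q')`_i.
Proof.
move=> hp hq; rewrite !coefM; apply: eq_bigr => j _.
rewrite hp; last by rewrite -ltnS. by rewrite hq // leq_subr.
Qed.

Lemma pmul_tr p q i k : (k <= i)%N -> pc (pmul p q) k = (tr p i * tr q i)`_k.
Proof.
move=> hk; rewrite coefM /=; apply: eq_bigr => j _.
have hj : (j <= k)%N by rewrite -ltnS.
rewrite !coef_tr //; [exact: leq_trans (leq_subr _ _) hk | exact: leq_trans hj hk].
Qed.

Lemma pmulA : associative pmul.
Proof.
move=> x y z; apply: ps_eq => i.
rewrite (pmul_tr _ _ (leqnn i)) (pmul_tr (pmul x y) z (leqnn i)).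
transitivity ((tr x i * (tr y i * tr z i))`_i).
  by apply: agree => j hj //; rewrite coef_tr // (pmul_tr _ _ hj).
rewrite mulrA; apply: agree => j hj //; by rewrite coef_tr // (pmul_tr _ _ hj).
Qed.
Lemma pmulC : commutative pmul.
Proof. by move=> x y; apply: ps_eq => i; rewrite !(pmul_tr _ _ (leqnn i)) mulrC. Qed.
Lemma pmul1 : left_id pone pmul.
Proof.
move=> x; apply: ps_eq => i; rewrite (pmul_tr _ _ (leqnn i)).
transitivity ((1 * tr x i)`_i); last by rewrite mul1r coef_tr.
by apply: agree => j hj //; rewrite coef_tr // coef1 /=; case: (j == 0%N).
Qed.
Lemma pmulDl : left_distributive pmul padd.
Proof.
move=> x y z; apply: ps_eq => i.
change (pc (pmul (padd x y) z) i = pc (pmul x z) i + pc (pmul y z) i).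
rewrite !(pmul_tr _ _ (leqnn i)).
transitivity (((tr x i + tr y i) * tr z i)`_i); last by rewrite mulrDl coefD.
by apply: agree => j hj //; rewrite coefD !coef_tr.
Qed.
Lemma pone_neq0 : pone != pzero.
Proof.
apply/eqP => h; have := congr1 (fun p => pc p 0) h => /=.
by move/eqP; rewrite oner_eq0.
Qed.
HB.instance Definition _ := GRing.Zmodule_isComNzRing.Build PS pmulA pmulC pmul1 pmulDl pone_neq0.

Lemma pcD p q i : pc (p + q) i = pc p i + pc q i. Proof. by []. Qed.
Lemma pcN p i : pc (- p) i = - pc p i. Proof. by []. Qed.
Lemma pcB p q i : pc (p - q) i = pc p i - pc q i. Proof. by []. Qed.
Lemma pc0 i : pc 0 i = 0. Proof. by []. Qed.
Lemma pc1 i : pc 1 i = if i == 0%N then 1 else 0. Proof. by []. Qed.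
Lemma pcM p q i : pc (p * q) i = \sum_(j < i.+1) pc p j * pc q (i - j). Proof. by []. Qed.
Lemma pcMr p q i : pc (p * q) i = \sum_(j < i.+1) pc p (i - j) * pc q j.
Proof. by rewrite mulrC pcM; apply: eq_bigr => j _; rewrite mulrC. Qed.
Lemma pc_sum I (r : seq I) (P : pred I) (F : I -> PS) n :
  pc (\sum_(i <- r | P i) F i) n = \sum_(i <- r | P i) pc (F i) n.
Proof. by apply: (big_morph (fun x : PS => pc x n) (id1 := 0) (op1 := +%R)). Qed.

Definition Dl (p : PS) : PS := mkPS (fun i => pc p i.+1 *+ i.+1).

Lemma DlD p q : Dl (p + q) = Dl p + Dl q.
Proof. by apply: ps_eq => i /=; rewrite mulrnDl. Qed.
Lemma DlN p : Dl (- p) = - Dl p.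
Proof. by apply: ps_eq => i /=; rewrite mulNrn. Qed.
Lemma Dl1 : Dl 1 = 0.
Proof. by apply: ps_eq => i /=; rewrite mul0rn. Qed.

Lemma pcM_tr p q i k : (k <= i)%N -> pc (p * q) k = (tr p i * tr q i)`_k.
Proof. exact: pmul_tr. Qed.

Lemma DlM p q : Dl (p * q) = Dl p * q + p * Dl q.
Proof.
apply: ps_eq => i; rewrite pcD.
change (pc (p * q) i.+1 *+ i.+1 = pc (Dl p * q) i + pc (p * Dl q) i).
rewrite (pcM_tr _ _ (leqnn i.+1)) -coef_deriv derivM coefD.
rewrite (pcM_tr _ _ (leqnn i)) (pcM_tr (p) _ (leqnn i)).
congr (_ + _); apply: agree => j hj.
- by rewrite coef_deriv !coef_tr.
- by rewrite !coef_tr // ltnW.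
- by rewrite !coef_tr // ltnW.
- by rewrite coef_deriv !coef_tr.
Qed.

Variable d : R -> R.
Hypothesis dD : {morph d : x y / x + y}.
Hypothesis dM : forall x y, d (x * y) = d x * y + x * d y.

Lemma d0 : d 0 = 0.
Proof. have h := dD 0 0; rewrite addr0 in h; apply: (addrI (d 0)); by rewrite addr0 -h. Qed.
Lemma dN x : d (- x) = - d x.
Proof. apply: (addrI (d x)); by rewrite -dD !subrr d0. Qed.
Lemma dMn x k : d (x *+ k) = d x *+ k.
Proof. by elim: k => [|k IH]; rewrite ?mulr0n ?d0 // !mulrS dD IH. Qed.
Lemma d_sum I (r : seq I) (P : pred I) (F : I -> R) :
  d (\sum_(i <- r | P i) F i) = \sum_(i <- r | P i) d (F i).
Proof. exact: (big_morph d dD d0). Qed.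

Definition Dw (p : PS) : PS := mkPS (fun i => d (pc p i)).

Lemma DwD p q : Dw (p + q) = Dw p + Dw q.
Proof. by apply: ps_eq => i /=; rewrite dD. Qed.
Lemma DwN p : Dw (- p) = - Dw p.
Proof. by apply: ps_eq => i /=; rewrite dN. Qed.
Lemma Dw1 : d 1 = 0 -> Dw 1 = 0.
Proof. by move=> h; apply: ps_eq => i /=; case: (i == 0%N); rewrite ?h ?d0. Qed.
Lemma DwM p q : Dw (p * q) = Dw p * q + p * Dw q.
Proof.
apply: ps_eq => i; rewrite pcD /Dw /= d_sum -big_split /=.
by apply: eq_bigr => j _; rewrite dM.
Qed.
Lemma DwDl p : Dw (Dl p) = Dl (Dw p).
Proof. by apply: ps_eq => i /=; rewrite dMn. Qed.

Lemma logder_closed p q : p * q = 1 -> d 1 = 0 ->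
  Dl (q * Dw p) = Dw (q * Dl p).
Proof.
move=> pq d1.
have h1 : Dl p * q + p * Dl q = 0 by rewrite -DlM pq Dl1.
have h2 : Dw p * q + p * Dw q = 0 by rewrite -DwM pq Dw1.
have e1 : p * Dl q = - (Dl p * q) by apply/eqP; rewrite -addr_eq0 addrC h1.
have e2 : p * Dw q = - (Dw p * q) by apply/eqP; rewrite -addr_eq0 addrC h2.
rewrite DlM DwM DwDl; congr (_ + _).
transitivity (p * q * (Dl q * Dw p)); first by rewrite pq mul1r.
transitivity (p * q * (Dw q * Dl p)); last by rewrite pq mul1r.
transitivity (q * (p * Dl q) * Dw p); first by ring.
rewrite e1.
transitivity (q * (p * Dw q) * Dl p); last by ring.
rewrite e2; ring.
Qed.

Section Rec.
Variable T : Type.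
Variable dflt : T.
Variable step : nat -> (nat -> T) -> T.
Fixpoint rseq n := if n is n'.+1 then rcons (rseq n') (step n' (nth dflt (rseq n'))) else [::].
Lemma size_rseq n : size (rseq n) = n.
Proof. by elim: n => //= n IH; rewrite size_rcons IH. Qed.
Lemma rseq_prefix n k j : (j < n)%N -> nth dflt (rseq (n + k)) j = nth dflt (rseq n) j.
Proof.
move=> hj; elim: k => [|k IH]; first by rewrite addn0.
by rewrite addnS /= nth_rcons size_rseq (leq_trans hj (leq_addr _ _)) IH.
Qed.
Definition rec i := nth dflt (rseq i.+1) i.
Hypothesis step_ext : forall i f g, (forall j, (j < i)%N -> f j = g j) -> step i f = step i g.
Lemma rec_eq i : rec i = step i rec.
Proof.
rewrite /rec /= nth_rcons size_rseq ltnn eqxx; apply: step_ext => j hj.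
rewrite /rec -(subnKC hj) rseq_prefix //.
Qed.
End Rec.

Section Inverse.
Variables (p : PS) (u : R).
Hypothesis pu : pc p 0 * u = 1.
Definition inv_step (i : nat) (f : nat -> R) : R :=
  if i is 0 then u else - u * \sum_(j < i) f j * pc p (i - j).
Lemma inv_exists : exists q, p * q = 1.
Proof.
pose q := mkPS (rec 0 inv_step).
have qE : forall i, pc q i = inv_step i (pc q).
  move=> i; rewrite /q /= (rec_eq 0 (step := inv_step)) //.
  move=> [|i'] f g h //=; congr (_ * _); apply: eq_bigr => j _; rewrite h //.
clearbody q; exists q; rewrite mulrC; apply: ps_eq => i.
rewrite pcM big_ord_recr /= subnn qE.
case: i => [|i] /=; first by rewrite big_ord0 add0r mulrC.
have -> : - u * (\sum_(j < i.+1) pc q j * pc p (i.+1 - j)) * pc p 0 =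
   - (\sum_(j < i.+1) pc q j * pc p (i.+1 - j)) * (pc p 0 * u).
  by ring.
by rewrite pu mulr1 addrN.
Qed.
End Inverse.

Section Exp.
Variable invn : nat -> R.
Hypothesis invnE : forall i, invn i * i.+1%:R = 1.

Lemma natmul_inj0 (x : R) i : x *+ i.+1 = 0 -> x = 0.
Proof.
by move=> h; rewrite -[x]mul1r -(invnE i) -mulrA mulr_natl h mulr0.
Qed.

Lemma Dl_unique z q : Dl z = q * z -> pc z 0 = 0 -> z = 0.
Proof.
move=> hz z0.
suff H : forall i j, (j <= i)%N -> pc z j = 0 by apply: ps_eq => i; rewrite (H i i).
elim=> [|i IH] j hj; first by move: hj; rewrite leqn0 => /eqP ->.
case: (ltngtP j i.+1) hj => // [hlt|->] _; first by apply: IH.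
apply: (@natmul_inj0 _ i).
have h := congr1 (fun x => pc x i) hz.
change (pc z i.+1 *+ i.+1 = pc (q * z) i) in h.
rewrite h pcM big1 // => k _; rewrite IH ?mulr0 ?leq_subr //.
Qed.

Variable c : PS.
Definition exp_step (i : nat) (f : nat -> R) : R :=
  if i is i'.+1 then invn i' * \sum_(j < i) pc (Dl c) j * f (i' - j)%N else 1.
Definition pexp := mkPS (rec 0 exp_step).
Lemma pexpE i : pc pexp i = exp_step i (pc pexp).
Proof.
rewrite /pexp /= (rec_eq 0 (step := exp_step)) //.
move=> [|i'] f g h //=; congr (_ * _); apply: eq_bigr => j _; rewrite h //.
by rewrite ltnS leq_subr.
Qed.
Lemma pexp0 : pc pexp 0 = 1.
Proof. by rewrite pexpE. Qed.
Lemma pexpS i : pc pexp i.+1 = invn i * \sum_(j < i.+1) pc (Dl c) j * pc pexp (i - j)%N.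
Proof. by rewrite pexpE. Qed.
Lemma Dl_pexp : Dl pexp = Dl c * pexp.
Proof.
apply: ps_eq => i; change (pc pexp i.+1 *+ i.+1 = pc (Dl c * pexp) i).
by rewrite pexpS -mulr_natr mulrAC invnE mul1r pcM.
Qed.

Hypothesis c0 : pc c 0 = 0.
Hypothesis d1 : d 1 = 0.
Lemma Dw_pexp : Dw pexp = pexp * Dw c.
Proof.
apply/eqP; rewrite -subr_eq0; apply/eqP.
apply: (@Dl_unique _ (Dl c)).
  rewrite DlD DlN DlM -!DwDl Dl_pexp DwM; ring.
change (d (pc pexp 0) - pc (pexp * Dw c) 0 = 0).
rewrite pcM big_ord1 pexp0 mul1r; change (d 1 - d (pc c 0) = 0).
by rewrite c0 d0 d1 subrr.
Qed.
End Exp.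

End PSdef.


Section Conv.
Variable K : numFieldType.
Local Notation VL := (VL K).
Local Notation VS := (PS VL).

Definition toser (A : VS) : ser K := fun i => vval (pc A i).
Definition ofL (f : laur K) : VL :=
  match excluded_middle_informative (laur_valid f) with
  | left p => exist _ f p | right _ => 0 end.
Definition ofser (r : ser K) : VS := mkPS (fun i => ofL (r i)).

Lemma ofLK f : laur_valid f -> vval (ofL f) = f.
Proof. by rewrite /ofL; case: excluded_middle_informative. Qed.

Lemma toserK r : ser_valid r -> toser (ofser r) = r.
Proof. by move=> v; apply: funext => i; rewrite /toser /= ofLK. Qed.

Lemma toser_valid A : ser_valid (toser A).
Proof. by move=> i; exact: proj2_sig (pc A i). Qed.

Lemma toser_inj A B : toser A = toser B -> A = B.
Proof.
move=> h; apply: ps_eq => i; apply: vl_eq; by move/(congr1 (fun r => r i)): h.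
Qed.

Lemma ser_mulE A B : ser_mul (toser A) (toser B) = toser (A * B).
Proof.
apply: funext => i; apply: funext => n; rewrite /ser_mul /toser pcM vval_sum.
by apply: eq_bigr => j _; rewrite vvalM.
Qed.

Lemma ser_addE A B : ser_add (toser A) (toser B) = toser (A + B).
Proof. by []. Qed.

Lemma ser_oneE : ser_one = toser 1.
Proof.
apply: funext => i; apply: funext => n; rewrite /ser_one /toser pc1.
by case: (i == 0%N) => //=; rewrite vval1.
Qed.

Definition vd := @vder K.
Definition Dwv := Dw vd.

Lemma ser_derivE A : ser_deriv (toser A) = toser (Dwv A).
Proof. by []. Qed.

Definition lamPS (A : VS) : VS := mkPS (fun i => if i is i'.+1 then pc A i' else 0).

Lemma ser_lamE A : ser_lam (toser A) = toser (lamPS A).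
Proof. by apply: funext => -[|i]. Qed.

Lemma vd_morph : {morph vd : x y / x + y}.
Proof. exact: vderD. Qed.
Lemma vd_M x y : vd (x * y) = vd x * y + x * vd y.
Proof. exact: vderM. Qed.
Lemma vd1 : vd 1 = 0.
Proof. exact: vder1. Qed.

Definition invn (i : nat) : VL := vcst (i.+1%:R^-1).
Lemma invnE i : invn i * i.+1%:R = 1.
Proof.
apply: vl_eq; apply: funext => n; rewrite vcstM vvalMn vval1 /laur_one.
case: (n == 0); last by rewrite mul0rn mulr0.
by rewrite mulVf // pnatr_eq0.
Qed.

End Conv.


Section Main.
Variable K : numFieldType.
Local Notation VL := (VL K).
Local Notation VS := (PS VL).
Implicit Types A B R S G H : VS.

Lemma inps_mul (f g : laur K) : laur_in_ps f -> laur_in_ps g -> laur_in_ps (laur_mul f g).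
Proof. by move=> h1 h2; have := lb_mul h1 h2; rewrite addr0. Qed.

Lemma inps_deriv (f : laur K) : laur_in_ps f -> laur_in_ps (laur_deriv f).
Proof.
move=> h n hn; rewrite /laur_deriv.
case: (eqVneq n (-1)) => [->|ne]; first by rewrite addNr mul0r.
by rewrite h ?mulr0 //; lia.
Qed.

Lemma inps_winv (f : laur K) : laur_in_ps f -> laur_in_winv_ps f.
Proof. by move=> h n hn; apply: h; lia. Qed.

Definition ps2 A := forall i, laur_in_ps (vval (pc A i)).
Definition winv A := forall i, laur_in_winv_ps (vval (pc A i)).
Definition res A (i : nat) := vval (pc A i) (-1).

Lemma ps2M A B : ps2 A -> ps2 B -> ps2 (A * B).
Proof.
move=> hA hB i n hn; rewrite pcM vval_sum big1 // => j _.
by rewrite vvalM inps_mul.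
Qed.

Lemma ps2D A B : ps2 A -> ps2 B -> ps2 (A + B).
Proof. by move=> hA hB i n hn; rewrite vvalD hA ?hB ?addr0. Qed.

Lemma ps2N A : ps2 A -> ps2 (- A).
Proof. by move=> hA i n hn; rewrite vvalN hA ?oppr0. Qed.

Lemma ps2_Dw A : ps2 A -> ps2 (Dwv A).
Proof. rewrite /ps2 => hA i; exact: inps_deriv (hA i). Qed.

Lemma ps2_lam A : ps2 A -> ps2 (lamPS A).
Proof. rewrite /ps2 => hA [|i] n hn //=; exact: hA. Qed.

Lemma winvD_ps2 A B : winv A -> ps2 B -> winv (A + B).
Proof. rewrite /winv /ps2 => hA hB i n hn; rewrite vvalD hA ?hB ?addr0 //; lia. Qed.

Lemma resD A B i : res (A + B) i = res A i + res B i.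
Proof. by []. Qed.

Lemma res_ps2 A i : ps2 A -> res A i = 0.
Proof. by rewrite /ps2 /res => h; rewrite h. Qed.

Lemma res_Dw A i : res (Dwv A) i = 0.
Proof. by rewrite /res /= /laur_deriv addNr mul0r. Qed.

Lemma res_lam A i : res (lamPS A) i.+1 = res A i.
Proof. by []. Qed.
Lemma res_lam0 A : res (lamPS A) 0 = 0.
Proof. by []. Qed.

Lemma res_logder R S : R * S = 1 -> laur_in_ps (vval (pc R 0)) ->
  laur_in_ps (vval (pc S 0)) -> forall i, res (S * Dwv R) i = 0.
Proof.
move=> RS h0 h1 [|i].
  rewrite /res pcM big_ord1 vvalM; apply: inps_mul => //.
  exact: inps_deriv.
have h := logder_closed (@vd_morph K) (@vd_M K) RS (@vd1 K).
have := congr1 (fun X => vval (pc X i) (-1)) h.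
change (vval (pc (S * Dwv R) i.+1 *+ i.+1) (-1) = laur_deriv (vval (pc (S * Dl R) i)) (-1) -> res (S * Dwv R) i.+1 = 0).
rewrite vvalMn /laur_deriv addNr mul0r => /eqP; rewrite mulrn_eq0 /=.
by move/eqP.
Qed.

Lemma LL (y h0 : laur K) : laur_valid y -> laur_in_ps h0 ->
  (forall n, n < 0 -> laur_deriv y n - laur_mul y h0 n = 0) -> laur_in_ps y.
Proof.
move=> vy hh hd.
have [N hN] := valid_lb vy.
suff H : forall k : nat, lb y (Num.min (N + k%:Z) 0).
  have := H (absz N); have -> : Num.min (N + (absz N)%:Z) 0 = 0.
    by apply/min_idPr; lia.
  by [].
elim=> [|k IH].
  by apply: lb_le hN _; rewrite addr0 ge_min lexx.
case: (lerP 0 (N + k%:Z)) => hk.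
  have -> : Num.min (N + k.+1%:Z) 0 = 0 by apply/min_idPr; lia.
  by rewrite (_ : Num.min (N + k%:Z) 0 = 0) in IH; last by apply/min_idPr.
have e : Num.min (N + k%:Z) 0 = N + k%:Z by apply/min_idPl; lia.
have e' : Num.min (N + k.+1%:Z) 0 = N + k%:Z + 1.
  rewrite min_l; lia.
rewrite e in IH; rewrite e'.
have yk : y (N + k%:Z) = 0.
  have := hd (N + k%:Z - 1); rewrite /laur_deriv.
  rewrite (lb_mul IH hh); last by lia.
  rewrite subr0 (_ : N + k%:Z - 1 + 1 = N + k%:Z); last by ring.
  move=> /(_ ltac:(lia)) /eqP; rewrite mulf_eq0 intr_eq0 => /orP[/eqP|/eqP] //.
  lia.
move=> n hn; case: (ltrP n (N + k%:Z)) => hn'; first exact: IH.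
by rewrite (_ : n = N + k%:Z) //; lia.
Qed.

End Main.


Section Main2.
Variable K : numFieldType.
Local Notation VL := (VL K).
Local Notation VS := (PS VL).
Implicit Types A B R S G H : VS.

Lemma inv_unique R S S' : R * S = 1 -> R * S' = 1 -> S = S'.
Proof.
move=> h1 h2; transitivity (S * (R * S')); first by rewrite h2 mulr1.
by rewrite mulrA (mulrC S) h1 mul1r.
Qed.

Lemma pc0M A B : pc (A * B) 0 = pc A 0 * pc B 0.
Proof. by rewrite pcM big_ord1. Qed.

Lemma ofLK' (x : VL) : ofL (vval x) = x.
Proof. by apply: vl_eq; rewrite ofLK //; exact: proj2_sig x. Qed.

Lemma oftoser A : ofser (toser A) = A.
Proof. by apply: ps_eq => i; rewrite /= /toser ofLK'. Qed.

Lemma unit0_inverse (r : ser K) : ser_valid r -> ps_unit1 (r 0%N) ->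
  exists S, ofser r * S = 1 /\ laur_in_ps (vval (pc S 0)).
Proof.
move=> vr [hr0 [h [hh hrh]]].
have vh : laur_valid h by exists 0.
pose u := ofL h.
have Ru : pc (ofser r) 0 * u = 1.
  by apply: vl_eq; rewrite vvalM /u /= !ofLK.
have [S RS] := inv_exists Ru.
exists S; split => //.
have -> : pc S 0 = u.
  have e : pc (ofser r * S) 0 = 1 by rewrite RS pc1.
  rewrite pc0M in e.
  transitivity (pc S 0 * (pc (ofser r) 0 * u)); first by rewrite Ru mulr1.
  by rewrite mulrA (mulrC (pc S 0)) e mul1r.
by rewrite /u ofLK.
Qed.

Lemma ser_inv_toser (r : ser K) S : ser_valid r -> ofser r * S = 1 -> ser_inv r = toser S.
Proof.
move=> vr RS.
have ex : exists s, ser_valid s /\ ser_mul r s = ser_one.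
  exists (toser S); split; first exact: toser_valid.
  by rewrite -{1}(toserK vr) ser_mulE RS ser_oneE.
have [vs hs] := epsilon_spec (inhabits (fun _ _ => 0)) _ ex.
rewrite -/(ser_inv r) in vs hs.
rewrite -(toserK vs); congr toser.
apply: (inv_unique (R := ofser r)) => //; apply: toser_inj.
by rewrite -ser_mulE !toserK // -ser_oneE.
Qed.

Definition Pa (a : ser K) R S := ofser a + lamPS (S * Dwv R).

Lemma a_primeE (a r : ser K) S : ser_valid a -> ser_valid r -> ofser r * S = 1 ->
  a_prime a r = toser (Pa a (ofser r) S).
Proof.
move=> va vr RS; rewrite /a_prime (ser_inv_toser vr RS).
transitivity (ser_add (toser (ofser a)) (ser_lam (ser_mul (toser S) (ser_deriv (toser (ofser r))))));
  first by rewrite !toserK.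
by rewrite ser_derivE ser_mulE ser_lamE ser_addE.
Qed.

Lemma lamD A B : lamPS (A + B) = lamPS A + lamPS B.
Proof. by apply: ps_eq => -[|i] //=; apply: vl_eq; apply: funext => n /=; rewrite addr0. Qed.
Lemma lamN A : lamPS (- A) = - lamPS A.
Proof. by apply: ps_eq => -[|i] //=; apply: vl_eq; apply: funext => n /=; rewrite oppr0. Qed.

Lemma DwvM A B : Dwv (A * B) = Dwv A * B + A * Dwv B.
Proof. exact: (DwM (@vd_morph K) (@vd_M K)). Qed.
Lemma Dwv1 : Dwv (1 : VS) = 0.
Proof. exact: (Dw1 (@vd_morph K) (@vd1 K)). Qed.

End Main2.


Section Main3.
Variable K : numFieldType.
Local Notation VL := (VL K).
Local Notation VS := (PS VL).
Implicit Types A B R S G H : VS.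

Definition inYv (a : ser K) R S :=
  winv (Pa a R S) /\ forall i, res (Pa a R S) i = minus_half_lam i.

Lemma inY_iff (a r : ser K) S : ser_valid a -> ser_valid r -> ofser r * S = 1 ->
  inY a r <-> ps_unit1 (r 0%N) /\ inYv a (ofser r) S.
Proof.
move=> va vr RS; rewrite /inY (a_primeE va vr RS); split.
  case=> _ hu hw hr; split => //; split => // i.
  by have := congr1 (fun f => f i) hr.
case=> hu [hw hr]; split => //.
by apply: funext => i; rewrite -hr.
Qed.

Lemma vval_ofser (r : ser K) i : ser_valid r -> vval (pc (ofser r) i) = r i.
Proof. by move=> v; rewrite /= ofLK. Qed.

Lemma resP (a : ser K) R S i : ser_valid a -> R * S = 1 ->
  laur_in_ps (vval (pc R 0)) -> laur_in_ps (vval (pc S 0)) ->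
  res (Pa a R S) i = a i (-1).
Proof.
move=> va RS h0 h1; rewrite /Pa resD.
have -> : res (lamPS (S * Dwv R)) i = 0.
  case: i => [|i]; first exact: res_lam0.
  by rewrite res_lam; apply: res_logder.
by rewrite addr0 /res vval_ofser.
Qed.

Lemma necessity (a r : ser K) : ser_valid a -> inY a r ->
  laur_in_winv_ps (a 1%N) /\ ser_res a = minus_half_lam.
Proof.
move=> va hY; have [vr hu _ _] := hY.
have [S [RS hS0]] := unit0_inverse vr hu.
have hR0 : laur_in_ps (vval (pc (ofser r) 0)) by rewrite vval_ofser //; case: hu.
have [_ [hw hr]] := (inY_iff va vr RS).1 hY.
split.
  move=> n hn; have := hw 1%N n hn.
  rewrite /Pa vvalD vval_ofser //.
  change (a 1%N n + vval (pc (S * Dwv (ofser r)) 0) n = 0 -> a 1%N n = 0).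
  rewrite pc0M vvalM inps_mul ?addr0 //; last by lia.
  exact: inps_deriv.
apply: funext => i; rewrite -hr /ser_res (resP _ _ RS) //.
Qed.

Lemma ps2_valid (g : ser K) : in_ps2 g -> ser_valid g.
Proof. by move=> hg i; exists 0; exact: hg i. Qed.

Lemma ps2_ofser (g : ser K) : in_ps2 g -> ps2 (ofser g).
Proof. by move=> hg i; rewrite vval_ofser; [exact: hg | exact: ps2_valid]. Qed.

Lemma action (a g r : ser K) : ser_valid a -> ps2_unit g -> inY a r ->
  inY a (ser_mul g r).
Proof.
move=> va [hg [h [hh gh]]] hY; have [vr hu _ _] := hY.
have vg := ps2_valid hg; have vh := ps2_valid hh.
have psG := ps2_ofser hg; have psH := ps2_ofser hh.
have GH : ofser g * ofser h = 1.
  by apply: toser_inj; rewrite -ser_mulE !toserK // gh ser_oneE.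
have [S [RS hS0]] := unit0_inverse vr hu.
have hR0 : laur_in_ps (vval (pc (ofser r) 0)) by rewrite vval_ofser //; case: hu.
have e : ser_mul g r = toser (ofser g * ofser r) by rewrite -ser_mulE !toserK.
rewrite e.
have RS' : ofser (toser (ofser g * ofser r)) * (ofser h * S) = 1.
  by rewrite oftoser mulrACA GH RS mulr1.
apply/(inY_iff va (toser_valid _) RS').
have [_ [hw hr]] := (inY_iff va vr RS).1 hY.
split.
  split; first by rewrite /toser pc0M vvalM; apply: inps_mul => //; exact: psG.
  exists (vval (pc (ofser h * S) 0)); split.
    by rewrite pc0M vvalM; apply: inps_mul => //; exact: psH.
  rewrite /toser -vvalM -pc0M.
  by rewrite mulrACA GH RS mulr1 pc1.
rewrite oftoser.
have E : Pa a (ofser g * ofser r) (ofser h * S) =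
         Pa a (ofser r) S + lamPS (ofser h * Dwv (ofser g)).
  rewrite /Pa -addrA -lamD; congr (_ + lamPS _).
  rewrite DwvM mulrDr.
  have -> : ofser h * S * (Dwv (ofser g) * ofser r) =
            ofser h * Dwv (ofser g) * (ofser r * S) by ring.
  have -> : ofser h * S * (ofser g * Dwv (ofser r)) =
            (ofser g * ofser h) * (S * Dwv (ofser r)) by ring.
  by rewrite RS GH mulr1 mul1r addrC.
have psX : ps2 (lamPS (ofser h * Dwv (ofser g))).
  by apply: ps2_lam; apply: ps2M => //; exact: ps2_Dw.
rewrite /inYv E; split; first exact: winvD_ps2.
by move=> i; rewrite resD (res_ps2 _ psX) addr0.
Qed.

Lemma ode_ps2 (a : ser K) R S R0 S0 : ser_valid a -> R * S = 1 -> R0 * S0 = 1 ->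
  inYv a R S -> inYv a R0 S0 -> ps2 (R * S0).
Proof.
move=> va RS RS0 [hw hr] [hw0 hr0].
pose hd := S * Dwv R - S0 * Dwv R0.
have Ediff : Pa a R S - Pa a R0 S0 = lamPS hd.
  by rewrite /Pa /hd lamD lamN; ring.
have psh : ps2 hd.
  move=> i n hn.
  rewrite -[vval (pc hd i) n]/(vval (pc (lamPS hd) i.+1) n) -Ediff vvalB.
  case: (eqVneq n (-1)) => [->|ne].
    by have := hr i.+1; have := hr0 i.+1; rewrite /res => -> ->; rewrite subrr.
  rewrite hw ?hw0 ?subrr //; lia.
have DG : Dwv (R * S0) = (R * S0) * hd.
  have h2 : Dwv R0 * S0 + R0 * Dwv S0 = 0 by rewrite -DwvM RS0 Dwv1.
  have eS0 : Dwv S0 = - (S0 * S0 * Dwv R0).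
    transitivity (S0 * (R0 * Dwv S0)); first by rewrite mulrA (mulrC S0) RS0 mul1r.
    have -> : R0 * Dwv S0 = - (Dwv R0 * S0) by apply/eqP; rewrite -addr_eq0 addrC h2.
    ring.
  rewrite DwvM eS0 /hd.
  transitivity ((R * S) * (S0 * Dwv R) - R * (S0 * S0 * Dwv R0)).
    by rewrite RS mul1r; ring.
  ring.
have main : forall i, (forall j, (j < i)%N -> laur_in_ps (vval (pc (R * S0) j))) ->
    laur_in_ps (vval (pc (R * S0) i)).
  move=> i IH; apply: (@LL _ (vval (pc (R * S0) i)) (vval (pc hd 0))).
  - exact: proj2_sig.
  - exact: (psh 0%N).
  move=> n hn.
  have e : laur_deriv (vval (pc (R * S0) i)) n = vval (pc (R * S0 * hd) i) n.
    by rewrite -DG.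
  rewrite e pcM big_ord_recr vvalD vval_sum big1; last first.
    move=> j _; rewrite vvalM inps_mul //; first exact: (IH _ (ltn_ord j)).
  have hom : nat_of_ord (@ord_max i) = i by [].
  by rewrite add0r vvalM hom subnn subrr.
suff H : forall n j, (j < n)%N -> laur_in_ps (vval (pc (R * S0) j)).
  by move=> i; apply: (H i.+1).
elim=> [|n IHn] j //; rewrite ltnS leq_eqVlt => /orP[/eqP ->|hj].
  by apply: main.
exact: IHn.
Qed.

Lemma uniq_orbit (a r r0 : ser K) : ser_valid a -> inY a r -> inY a r0 ->
  exists g, ps2_unit g /\ r = ser_mul g r0.
Proof.
move=> va hY hY0; have [vr hu _ _] := hY; have [vr0 hu0 _ _] := hY0.
have [S [RS hS]] := unit0_inverse vr hu.
have [S0 [RS0 hS0]] := unit0_inverse vr0 hu0.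
have [_ Y] := (inY_iff va vr RS).1 hY.
have [_ Y0] := (inY_iff va vr0 RS0).1 hY0.
have psG := ode_ps2 va RS RS0 Y Y0.
have psH := ode_ps2 va RS0 RS Y0 Y.
exists (toser (ofser r * S0)); split.
  split; first exact: psG.
  exists (toser (ofser r0 * S)); split; first exact: psH.
  rewrite ser_mulE ser_oneE; congr toser.
  by rewrite mulrACA (mulrC S0) -mulrACA RS RS0 mulr1.
transitivity (ser_mul (toser (ofser r * S0)) (toser (ofser r0))); last by rewrite toserK.
rewrite ser_mulE.
have -> : ofser r * S0 * ofser r0 = ofser r by rewrite -mulrA (mulrC S0) RS0 mulr1.
by rewrite toserK.
Qed.

Definition cfun (f : laur K) : laur K :=
  fun n => if n < 0 then - f (n - 1) / n%:~R else 0.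

Lemma cfun_valid (f : laur K) : laur_valid f -> laur_valid (cfun f).
Proof.
case=> N hN; exists (Num.min (N + 1) 0) => n; rewrite lt_min => /andP[h1 h2].
by rewrite /cfun h2 hN ?oppr0 ?mul0r //; lia.
Qed.

Lemma cfun_deriv (f : laur K) n : n < -1 -> laur_deriv (cfun f) n = - f n.
Proof.
move=> hn; rewrite /laur_deriv /cfun ifT; last by lia.
rewrite (_ : n + 1 - 1 = n); last by ring.
rewrite mulrCA mulfV ?mulr1 // intr_eq0; apply/eqP; lia.
Qed.

Definition vcfun (x : VL) : VL := exist _ _ (cfun_valid (proj2_sig x)).

Lemma existence (a : ser K) : ser_valid a -> laur_in_ps (a 0%N) ->
  laur_in_winv_ps (a 1%N) -> ser_res a = minus_half_lam -> exists r, inY a r.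
Proof.
move=> va h0 h1 hres.
pose c : VS := mkPS (fun i => if i is j.+1 then vcfun (pc (ofser a) j.+2) else 0).
have c0 : pc c 0 = 0 by [].
pose R := pexp (@invn K) c.
have hDw : Dwv R = R * Dwv c :=
  Dw_pexp (@vd_morph K) (@vd_M K) (@invnE K) c0 (@vd1 K).
have R0 : pc R 0 = 1 := pexp0 _ _.
have [S RS] : exists S, R * S = 1 by apply: (@inv_exists _ R 1); rewrite R0 mulr1.
exists (toser R).
have RS' : ofser (toser R) * S = 1 by rewrite oftoser.
apply/(inY_iff va (toser_valid R) RS').
have tR0 : toser R 0%N = laur_one by rewrite /toser R0.
split.
  rewrite tR0; split; first exact: lb_cst.
  exists laur_one; split; first exact: lb_cst.
  by rewrite -vval1 -vvalM mulr1.
rewrite oftoser.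
have D : S * Dwv R = Dwv c by rewrite hDw mulrA (mulrC S) RS mul1r.
rewrite /inYv /Pa D; split.
  case=> [|[|j]] n hn; rewrite vvalD vval_ofser //.
  - by rewrite addr0 h0 //; lia.
  - have -> : vval (pc (lamPS (Dwv c)) 1) n = 0.
      by rewrite /= /laur_deriv /= mulr0.
    by rewrite addr0 h1.
  - change (a j.+2 n + laur_deriv (cfun (vval (pc (ofser a) j.+2))) n = 0).
    by rewrite vval_ofser // cfun_deriv // subrr.
move=> i; rewrite resD.
have -> : res (lamPS (Dwv c)) i = 0.
  case: i => [|i]; first exact: res_lam0.
  by rewrite res_lam res_Dw.
by rewrite addr0 /res vval_ofser // -hres.
Qed.

End Main3.


Unset Implicit Arguments. Set Strict Implicit.

Theorem lemma4p8 (R : realType) (t d : ps R[i]) (a : ser R[i]) :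
  disc t d 0%N = 0 ->
  disc t d 1%N != 0 ->
  ser_valid a ->
  spectral_a0 t d (a 0%N) ->
  (forall g r, ps2_unit g -> inY a r -> inY a (ser_mul g r)) /\
  ((forall r, ~ inY a r) \/
   exists r0, inY a r0 /\
     forall r, inY a r <-> exists g, ps2_unit g /\ r = ser_mul g r0) /\
  ((exists r, inY a r) <->
   (laur_in_winv_ps (a 1%N) /\ ser_res a = minus_half_lam)).
Proof.
move=> _ _ va [Z [_ _ ha0 _]].
split; first by move=> g r hg hr; exact: action va hg hr.
split.
  case: (pselect (exists r, inY a r)) => [[r0 h0]|hn]; [right|left].
    exists r0; split => // r; split.
      by move=> hr; exact: uniq_orbit va hr h0.
    by case=> g [hg ->]; exact: action va hg h0.
  by move=> r hr; apply: hn; exists r.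
split; first by case=> r hr; exact: necessity va hr.
by case=> h1 hres; exact: existence va ha0 h1 hres.
Qed.
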